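(* Let $G$ be an infinite totally bounded topological group with identity $e$, and let $\vec m=(m_1,\dots,m_k)\in\mathbb{Z}^k$ satisfy $m_1+\dots+m_k=0$. Then every neighbourhood $U$ of $e$ in $G$ is a Ramsey $\vec m$-product subset of $G$.
   Context: A subset $A$ of a group $G$ is a Ramsey $\vec m$-product subset, for $\vec m=(m_1,\dots,m_k)\in\mathbb{Z}^k$, if every infinite subset $X\subseteq G$ contains pairwise distinct $x_1,\dots,x_k\in X$ such that $x_{\sigma(1)}^{m_1}x_{\sigma(2)}^{m_2}\cdots x_{\sigma(k)}^{m_k}\in A$ for every permutation $\sigma\in S_k$. *)

(* Defs.v *)
From Stdlib Require Import ZArith List Permutation.
Import ListNotations.


Record TopGroup := {
  carrier :> Type;
  gmul : carrier -> carrier -> carrier;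
  ginv : carrier -> carrier;
  gone : carrier;
  gmulA : forall x y z, gmul x (gmul y z) = gmul (gmul x y) z;
  gmul1l : forall x, gmul gone x = x;
  gmul1r : forall x, gmul x gone = x;
  gmulVl : forall x, gmul (ginv x) x = gone;
  gmulVr : forall x, gmul x (ginv x) = gone;
  is_open : (carrier -> Prop) -> Prop;
  open_full : is_open (fun _ => True);
  open_union : forall F : (carrier -> Prop) -> Prop,
      (forall V, F V -> is_open V) ->
      is_open (fun x => exists V, F V /\ V x);
  open_inter : forall V W, is_open V -> is_open W ->
      is_open (fun x => V x /\ W x);
  mul_cont : forall a b (W : carrier -> Prop), is_open W -> W (gmul a b) ->
      exists V1 V2, is_open V1 /\ is_open V2 /\ V1 a /\ V2 b /\
        (forall x y, V1 x -> V2 y -> W (gmul x y));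
  inv_cont : forall a (W : carrier -> Prop), is_open W -> W (ginv a) ->
      exists V, is_open V /\ V a /\ (forall x, V x -> W (ginv x))
}.

Section Defs.
Variable G : TopGroup.

Definition neighbourhood (a : G) (U : G -> Prop) : Prop :=
  exists V, is_open G V /\ V a /\ (forall x, V x -> U x).

Definition finite_set (X : G -> Prop) : Prop :=
  exists l : list G, forall x, X x -> In x l.

Definition infinite_set (X : G -> Prop) : Prop := ~ finite_set X.

Definition totally_bounded : Prop :=
  forall U, neighbourhood (gone G) U ->
    exists F : list G, forall x, exists g u, In g F /\ U u /\ x = gmul G g u.

Fixpoint npow (x : G) (n : nat) : G :=
  match n with O => gone G | S n => gmul G x (npow x n) end.

Definition zpow (x : G) (z : Z) : G :=
  match z with
  | Z0 => gone G
  | Zpos p => npow x (Pos.to_nat p)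
  | Zneg p => ginv G (npow x (Pos.to_nat p))
  end.

Fixpoint prodpow (ms : list Z) (ys : list G) : G :=
  match ms, ys with
  | m :: ms', y :: ys' => gmul G (zpow y m) (prodpow ms' ys')
  | _, _ => gone G
  end.

(* Since xs has no
   duplicates, the lists ys that are permutations of xs are exactly the
   reorderings [x_{sigma(1)}; ...; x_{sigma(k)}] for sigma in S_k. *)
Definition ramsey_product (m : list Z) (A : G -> Prop) : Prop :=
  forall X : G -> Prop, infinite_set X ->
    exists xs : list G,
      length xs = length m /\ NoDup xs /\ (forall x, In x xs -> X x) /\
      (forall ys, Permutation xs ys -> A (prodpow m ys)).

End Defs.

(* Main.v *)
Require Import Defs.
From Stdlib Require Import ZArith List Permutation Lia Classical.
Import ListNotations.

Section Aux.
Variable G : TopGroup.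
Local Notation "x ** y" := (gmul G x y) (at level 40, left associativity).
Local Notation e := (gone G).
Local Notation gi := (ginv G).
Local Notation nbhd := (neighbourhood G).

Lemma ginv_one : gi e = e.
Proof. rewrite <- (gmul1r G (gi e)). apply gmulVl. Qed.

Lemma gmulKV a b : gi a ** (a ** b) = b.
Proof. rewrite gmulA, gmulVl, gmul1l. reflexivity. Qed.

Lemma gmulKV' a b : a ** (gi a ** b) = b.
Proof. rewrite gmulA, gmulVr, gmul1l. reflexivity. Qed.

Lemma ginv_mul a b : gi (a ** b) = gi b ** gi a.
Proof.
  assert (H : a ** b ** (gi b ** gi a) = e).
  { rewrite <- !gmulA. rewrite gmulKV'. apply gmulVr. }
  rewrite <- (gmulKV (a ** b) (gi b ** gi a)). rewrite H, gmul1r. reflexivity.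
Qed.

Lemma ginv_inv a : gi (gi a) = a.
Proof.
  rewrite <- (gmul1r G (gi (gi a))). rewrite <- (gmulVl G a).
  rewrite gmulA, gmulVl, gmul1l. reflexivity.
Qed.

Lemma nbhd_pt a U : nbhd a U -> U a.
Proof. intros [V [_ [Va H]]]. auto. Qed.

Lemma nbhd_inter a P Q : nbhd a P -> nbhd a Q -> nbhd a (fun x => P x /\ Q x).
Proof.
  intros [V [HV [Va HVP]]] [W [HW [Wa HWQ]]].
  exists (fun x => V x /\ W x). split; [apply open_inter; auto|]. split; auto.
  intros x [? ?]; auto.
Qed.

Lemma nbhd_list (F : list G) (P : G -> G -> Prop) a :
  (forall g, In g F -> nbhd a (P g)) -> nbhd a (fun w => forall g, In g F -> P g w).
Proof.
  induction F as [|g0 F IH]; intros H.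
  - exists (fun _ => True). split; [apply open_full|]. split; auto.
    intros x _ g [].
  - assert (H1 := H g0 (or_introl eq_refl)).
    assert (H2 : nbhd a (fun w => forall g, In g F -> P g w)).
    { apply IH. intros g Hg. apply H. right; auto. }
    destruct (nbhd_inter _ _ _ H1 H2) as [V [HV [Va HVP]]].
    exists V. split; auto. split; auto. intros x Vx g Hg.
    destruct (HVP x Vx) as [Ha Hb]. destruct Hg as [<-|Hg]; auto.
Qed.

Lemma mul_nbhd U : nbhd e U ->
  exists A B, nbhd e A /\ nbhd e B /\ forall x y, A x -> B y -> U (x ** y).
Proof.
  intros [O [HO [Oe HOU]]].
  assert (Oe' : O (e ** e)) by (rewrite gmul1l; auto).
  destruct (mul_cont G e e O HO Oe') as [V1 [V2 [H1 [H2 [V1e [V2e H]]]]]].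
  exists V1, V2. split; [exists V1; auto|]. split; [exists V2; auto|].
  intros; auto.
Qed.

Lemma inv_nbhd U : nbhd e U -> nbhd e (fun v => U (gi v)).
Proof.
  intros [O [HO [Oe HOU]]].
  assert (Oe' : O (gi e)) by (rewrite ginv_one; auto).
  destruct (inv_cont G e O HO Oe') as [V [HV [Ve H]]].
  exists V. split; auto.
Qed.

Lemma conj_nbhd a b x C : nbhd (a ** x ** b) C -> nbhd x (fun w => C (a ** w ** b)).
Proof.
  intros [O [HO [Oe HOC]]].
  destruct (mul_cont G (a ** x) b O HO Oe) as [V1 [V2 [H1 [H2 [V1a [V2b H]]]]]].
  destruct (mul_cont G a x V1 H1 V1a) as [P1 [P2 [HP1 [HP2 [P1a [P2x HP]]]]]].
  exists P2. split; [exact HP2|]. split; [exact P2x|]. intros w Hw. apply HOC, H; auto.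
Qed.

Hypothesis Htb : totally_bounded G.

Lemma sin U : nbhd e U -> exists W, nbhd e W /\ forall x w, W w -> U (gi x ** w ** x).
Proof.
  intros HU.
  destruct (mul_nbhd U HU) as [A [B [HA [HB HAB]]]].
  destruct (mul_nbhd B HB) as [C [D [HC [HD HCD]]]].
  assert (HE := inv_nbhd A HA).
  destruct (Htb _ (nbhd_inter _ _ _ HD HE)) as [F HF].
  exists (fun w => forall g, In g F -> C (gi g ** w ** g)). split.
  - apply nbhd_list. intros g _. apply conj_nbhd.
    rewrite gmul1r, gmulVl. auto.
  - intros x w Hw. destruct (HF x) as [g [u [Hg [[Du Eu] ->]]]].
    assert (Heq : gi (g ** u) ** w ** (g ** u) = gi u ** ((gi g ** w ** g) ** u)).
    { rewrite ginv_mul. rewrite <- !gmulA. reflexivity. }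
    rewrite Heq. apply HAB; auto.
Qed.

Lemma npow_near n U : nbhd e U ->
  exists W, nbhd e W /\ forall g z, W z -> exists u, U u /\ npow G (g ** z) n = u ** npow G g n.
Proof.
  revert U. induction n as [|n IH]; intros U HU.
  - exists U. split; auto. intros g z _. exists e. split; [apply nbhd_pt; auto|].
    simpl. rewrite gmul1l. reflexivity.
  - destruct (sin U HU) as [W1 [HW1 HS]].
    destruct (mul_nbhd W1 HW1) as [A [B [HA [HB HAB]]]].
    destruct (IH B HB) as [W2 [HW2 H2]].
    exists (fun z => A z /\ W2 z). split; [apply nbhd_inter; auto|].
    intros g z [Az W2z]. destruct (H2 g z W2z) as [u' [Bu' Heq]].
    exists (gi (gi g) ** (z ** u') ** gi g). split; [apply HS; auto|].
    simpl. rewrite Heq, ginv_inv. rewrite <- !gmulA. rewrite gmulKV. reflexivity.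
Qed.

Lemma zpow_near n U : nbhd e U ->
  exists W, nbhd e W /\ forall g z, W z -> exists u, U u /\ zpow G (g ** z) n = u ** zpow G g n.
Proof.
  intros HU. destruct n as [|p|p].
  - exists U. split; auto. intros g z _. exists e. split; [apply nbhd_pt; auto|].
    simpl. rewrite gmul1l. reflexivity.
  - apply npow_near; auto.
  - destruct (sin U HU) as [W1 [HW1 HS]].
    destruct (npow_near (Pos.to_nat p) _ (inv_nbhd W1 HW1)) as [W [HW H]].
    exists W. split; auto. intros g z Wz. destruct (H g z Wz) as [u' [Hu' Heq]].
    simpl. rewrite Heq. set (q := npow G g (Pos.to_nat p)).
    exists (gi q ** gi u' ** q). split; [apply HS; auto|].
    rewrite ginv_mul. rewrite <- !gmulA. rewrite gmulVr, gmul1r. reflexivity.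
Qed.

Lemma npow_succ_r g n : npow G g (S n) = npow G g n ** g.
Proof.
  induction n as [|n IH]; simpl in *.
  - rewrite gmul1r, gmul1l. reflexivity.
  - rewrite <- gmulA, <- IH. reflexivity.
Qed.

Lemma zpow_nat g n : zpow G g (Z.of_nat n) = npow G g n.
Proof. destruct n; simpl; [reflexivity|]. rewrite SuccNat2Pos.id_succ. reflexivity. Qed.

Lemma zpow_negnat g n : zpow G g (- Z.of_nat n) = gi (npow G g n).
Proof.
  destruct n; simpl.
  - rewrite ginv_one. reflexivity.
  - rewrite SuccNat2Pos.id_succ. reflexivity.
Qed.

Lemma zpow_succ g z : zpow G g (z + 1) = zpow G g z ** g.
Proof.
  destruct (Z_of_nat_complete_inf (Z.abs z)) as [n Hn]; [lia|].
  destruct (Z.abs_spec z) as [[Hz Ha]|[Hz Ha]].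
  - replace (z + 1)%Z with (Z.of_nat (S n)) by lia. replace z with (Z.of_nat n) by lia.
    rewrite !zpow_nat. apply npow_succ_r.
  - destruct n as [|q]; [lia|].
    replace (z + 1)%Z with (- Z.of_nat q)%Z by lia.
    replace z with (- Z.of_nat (S q))%Z by lia.
    rewrite !zpow_negnat. simpl. rewrite ginv_mul. rewrite <- gmulA, gmulVl, gmul1r.
    reflexivity.
Qed.

Lemma zpow_pred g z : zpow G g (z - 1) = zpow G g z ** gi g.
Proof.
  rewrite <- (Z.sub_add 1 z) at 2. rewrite zpow_succ. rewrite <- gmulA, gmulVr, gmul1r.
  reflexivity.
Qed.

Lemma zpow_add g a b : zpow G g (a + b) = zpow G g a ** zpow G g b.
Proof.
  induction b as [|b IH|b IH] using Z.peano_ind.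
  - rewrite Z.add_0_r. simpl. rewrite gmul1r. reflexivity.
  - rewrite <- Z.add_1_r, Z.add_assoc, !zpow_succ, IH, gmulA. reflexivity.
  - rewrite <- Z.sub_1_r, Z.add_sub_assoc, !zpow_pred, IH, gmulA. reflexivity.
Qed.

Lemma key m U : nbhd e U ->
  exists W, nbhd e W /\ forall g ys, length ys = length m ->
    (forall y, In y ys -> exists w, W w /\ y = g ** w) ->
    exists u, U u /\ prodpow G m ys = u ** zpow G g (fold_right Z.add 0%Z m).
Proof.
  revert U. induction m as [|m0 m IH]; intros U HU.
  - exists U. split; auto. intros g ys Hl _. destruct ys; [|discriminate].
    exists e. split; [apply nbhd_pt; auto|]. simpl. rewrite gmul1l. reflexivity.
  - destruct (mul_nbhd U HU) as [A [B [HA [HB HAB]]]].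
    destruct (sin B HB) as [WB [HWB HS]].
    destruct (IH WB HWB) as [W' [HW' Hk]].
    destruct (zpow_near m0 A HA) as [W0 [HW0 H0]].
    exists (fun z => W0 z /\ W' z). split; [apply nbhd_inter; auto|].
    intros g ys Hl Hys. destruct ys as [|y0 ys]; [discriminate|].
    simpl in Hl. injection Hl as Hl.
    destruct (Hys y0 (or_introl eq_refl)) as [z0 [[W0z W'z] ->]].
    destruct (H0 g z0 W0z) as [u0 [Au0 E0]].
    destruct (Hk g ys Hl) as [u' [Hu' E']].
    { intros y Hy. destruct (Hys y (or_intror Hy)) as [w [[_ Hw] ->]]. eauto. }
    set (p := zpow G g m0).
    exists (u0 ** (gi (gi p) ** u' ** gi p)). split; [apply HAB; auto|].
    simpl. rewrite E0, E', zpow_add. fold p. rewrite ginv_inv.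
    rewrite <- !gmulA. rewrite gmulKV. reflexivity.
Qed.

Lemma finite_union (F : list G) (S : G -> G -> Prop) :
  (forall g, In g F -> finite_set G (S g)) ->
  finite_set G (fun x => exists g, In g F /\ S g x).
Proof.
  induction F as [|g0 F IH]; intros H.
  - exists []. intros x [g [[] _]].
  - destruct (H g0 (or_introl eq_refl)) as [l0 Hl0].
    destruct IH as [l Hl]. { intros; apply H; right; auto. }
    exists (l0 ++ l). intros x [g [[<-|Hg] Hs]]; apply in_or_app; [left|right]; eauto.
Qed.

Lemma extract (Y : G -> Prop) : infinite_set G Y ->
  forall n, exists l, length l = n /\ NoDup l /\ forall x, In x l -> Y x.
Proof.
  intros HY n. induction n as [|n [l [Hl [Hnd HlY]]]].
  - exists []. repeat split; auto. constructor. intros x [].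
  - assert (Hex : exists x, Y x /\ ~ In x l).
    { apply NNPP. intros Hn. apply HY. exists l. intros x Yx.
      apply NNPP. intros Hni. apply Hn. eauto. }
    destruct Hex as [x [Yx Hx]]. exists (x :: l). simpl. repeat split; auto.
    + constructor; auto.
    + intros y [<-|Hy]; auto.
Qed.

End Aux.

Theorem proposition5p1 (G : TopGroup)
  (Hinf : infinite_set G (fun _ : G => True))
  (Htb : totally_bounded G)
  (m : list Z) (Hsum : fold_right Z.add 0%Z m = 0%Z)
  (U : G -> Prop) (HU : neighbourhood G (gone G) U) :
  ramsey_product G m U.
Proof.
  destruct (key G Htb m U HU) as [W [HW Hk]].
  destruct (Htb W HW) as [F HF].
  intros X HX.
  assert (Hex : exists g, In g F /\
     infinite_set G (fun x => X x /\ exists w, W w /\ x = gmul G g w)).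
  { apply NNPP. intros Hn. apply HX.
    destruct (finite_union G F (fun g x => X x /\ exists w, W w /\ x = gmul G g w))
      as [l Hl].
    { intros g Hg. apply NNPP. intros Hnf. apply Hn. eauto. }
    exists l. intros x Xx. apply Hl. destruct (HF x) as [g [u [Hg [Wu ->]]]].
    exists g. split; auto. split; eauto. }
  destruct Hex as [g [_ Hinfg]].
  destruct (extract G _ Hinfg (length m)) as [xs [Hl [Hnd Hin]]].
  exists xs. split; auto. split; auto. split.
  - intros x Hx. apply (Hin x Hx).
  - intros ys Hp.
    destruct (Hk g ys) as [u [Uu Eq]].
    + rewrite <- (Permutation_length Hp). auto.
    + intros y Hy. apply (Permutation_in _ (Permutation_sym Hp)) in Hy.
      apply (Hin y Hy).
    + rewrite Eq, Hsum. simpl. rewrite gmul1r. auto.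
Qed.
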